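(* Let $q^{**}(g)=\max\{q(R): K(g;R)\le1\}$. Then the width of the Finsleroid is $$2q^{**}(g)=2\,e^{-\frac12G\Phi^{**}},$$ where $\Phi^{**}=\Phi(g;R)$ evaluated at any $R$ with $q(R)>0$ and $Z=-g\,q(R)$ (this value does not depend on the choice of such $R$); moreover the maximum is attained at points with $Z=-g\,q$.
   Context: Let $N\ge2$, $V_N=\mathbb{R}^N$ with points $R=(R^1,\dots,R^N)$, $Z=R^N$; indices $a,b$ run over $1,\dots,N-1$, repeated indices summed. Fix a symmetric positive-definite matrix $(r_{ab})$, $q(R)=\sqrt{r_{ab}R^aR^b}$. Fix $g\in(-2,2)$, $h=\sqrt{1-g^2/4}$, $G=g/h$. Define $B(g;R)=Z^2+gqZ+q^2$, $A(g;R)=Z+\frac12gq$, $\Phi(g;R)=\arctan(A/(hq))$ for $q>0$ ($\Phi=\pm\pi/2$ if $q=0$, $Z\gtrless0$), $J=e^{\frac12G\Phi}$, and the Finsleroid metric function $K(g;R)=\sqrt{B}\,J$ ($K(g;0)=0$). The Finsleroid is $\{R:K(g;R)\le1\}$. *)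

(* Defs.v *)
From HB Require Import structures.
From mathcomp Require Import all_boot all_order all_algebra.
From mathcomp Require Import all_classical all_reals all_analysis.
Set Implicit Arguments. Unset Strict Implicit. Unset Printing Implicit Defensive.
Import Order.TTheory GRing.Theory Num.Theory.
Local Open Scope ring_scope.

(* Points of V_N = R^N with N = n.+2 (so N >= 2) are row vectors 'rV[R]_(n.+2).
   The "horizontal" indices a = 1..N-1 are 'I_(n.+1), embedded by widen_ord;
   Z = R^N is the last coordinate (ord_max). *)
Section Finsleroid.
Variable R : realType.
Variable n : nat.

Definition Xc (v : 'rV[R]_(n.+2)) (a : 'I_(n.+1)) : R :=
  v 0 (widen_ord (leqnSn n.+1) a).

Definition Zc (v : 'rV[R]_(n.+2)) : R := v 0 ord_max.

Definition qf (r : 'M[R]_(n.+1)) (v : 'rV[R]_(n.+2)) : R :=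
  Num.sqrt (\sum_(a < n.+1) \sum_(b < n.+1) r a b * Xc v a * Xc v b).

Definition hF (g : R) : R := Num.sqrt (1 - g ^+ 2 / 4).
Definition GF (g : R) : R := g / hF g.

Definition BF (r : 'M[R]_(n.+1)) (g : R) (v : 'rV[R]_(n.+2)) : R :=
  Zc v ^+ 2 + g * qf r v * Zc v + qf r v ^+ 2.

Definition AF (r : 'M[R]_(n.+1)) (g : R) (v : 'rV[R]_(n.+2)) : R :=
  Zc v + g * qf r v / 2.

(* Phi = arctan(A/(h q)) for q > 0; +-pi/2 if q = 0 and Z >< 0
   (the value at q = 0, Z = 0, i.e. R = 0, is irrelevant and set to -pi/2). *)
Definition PhiF (r : 'M[R]_(n.+1)) (g : R) (v : 'rV[R]_(n.+2)) : R :=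
  if 0 < qf r v then atan (AF r g v / (hF g * qf r v))
  else if 0 < Zc v then pi / 2 else - (pi / 2).

Definition JF (r : 'M[R]_(n.+1)) (g : R) (v : 'rV[R]_(n.+2)) : R :=
  expR (GF g * PhiF r g v / 2).

Definition KF (r : 'M[R]_(n.+1)) (g : R) (v : 'rV[R]_(n.+2)) : R :=
  if v == 0 then 0 else Num.sqrt (BF r g v) * JF r g v.

Definition sym_posdef (r : 'M[R]_(n.+1)) : Prop :=
  r^T = r /\ forall x : 'rV[R]_(n.+1), x != 0 -> 0 < (x *m r *m x^T) 0 0.

End Finsleroid.

(* Main.v *)
Set Warnings "-notation-overridden,-ambiguous-paths,-notation-incompatible-prefix,-parsing".
Require Import Defs.
From HB Require Import structures.
From mathcomp Require Import all_boot all_order all_algebra.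
From mathcomp Require Import all_classical all_reals all_analysis.
From mathcomp Require Import ring lra.
Import Order.TTheory GRing.Theory Num.Theory.
Local Open Scope ring_scope.

Section V.
Variable R : realType.
Variables (k h : R).
Hypothesis hpos : 0 < h.

Definition Vf (s : R) : R := expR (k * atan (h^-1 * s)) * (s * s + h ^+ 2)^-1.

Lemma Vf_der (s : R) : is_derive s 1 Vf (Vf s * (k * h - 2 * s) / (s * s + h ^+ 2)).
Proof.
have hs0 : 0 < s * s + h ^+ 2 by apply: ltr_wpDl; [rewrite -expr2 sqr_ge0 | rewrite exprn_gt0].
have hs := lt0r_neq0 hs0.
have d1 := is_deriveZ (h^-1) (is_derive_id s 1).
have d2 := is_derive1_comp (is_derive1_atan (h^-1 * s)) d1.
have d3 := is_deriveZ k d2.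
have d4 := is_derive1_comp (is_derive_expR _) d3.
have d5 := is_deriveD (is_deriveM (is_derive_id s 1) (is_derive_id s 1)) (is_derive_cst (h^+2) s 1).
have d5' := @is_deriveV R (id * id + cst (h^+2)) s _ _ hs d5.
have d6 := is_deriveM d4 d5'.
have d7 : is_derive s 1 Vf _ := d6.
eapply is_derive_eq; [exact d7|].
rewrite /Vf /=.
change ((id * id + cst (h ^+ 2)) s) with (s * s + h ^+ 2).
have E (x y : R) : x *: y = x * y by [].
rewrite !E !mulr1 addr0.
set e := expR _.
have h0 : h != 0 by rewrite gt_eqF.
have h1 : 1 + (h^-1 * s) ^+ 2 = (s * s + h ^+ 2) / h ^+ 2.
  by field.
rewrite h1.
rewrite -[(id * id + cst _) s]/(s * s + h ^+ 2).
field.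
by rewrite hs h0.
Qed.

Lemma Vf_drv (x : R) : derivable Vf x 1.
Proof. by have [] := Vf_der x. Qed.

Lemma Vf_pos s : 0 < Vf s.
Proof.
rewrite /Vf mulr_gt0 ?expR_gt0 // invr_gt0.
by apply: ltr_wpDl; [rewrite -expr2 sqr_ge0 | rewrite exprn_gt0].
Qed.

Lemma Vf_strict s : s != k * h / 2 -> Vf s < Vf (k * h / 2).
Proof.
move=> ne.
have den x : 0 < x * x + h ^+ 2.
  by apply: ltr_wpDl; [rewrite -expr2 sqr_ge0 | rewrite exprn_gt0].
case: (ltgtP s (k * h / 2)) ne => // sl _.
- have [c cI E] := MVT sl (fun x _ => Vf_der x) (derivable_within_continuous (fun x _ => Vf_drv x)).
  rewrite -subr_gt0 E; apply: mulr_gt0; last by rewrite subr_gt0.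
  move: cI; rewrite in_itv /= => /andP [c1 c2].
  apply: mulr_gt0; last by rewrite invr_gt0.
  apply: mulr_gt0; first exact: Vf_pos.
  lra.
- have [c cI E] := MVT sl (fun x _ => Vf_der x) (derivable_within_continuous (fun x _ => Vf_drv x)).
  rewrite -subr_lt0 E pmulr_llt0; last by rewrite subr_gt0.
  move: cI; rewrite in_itv /= => /andP [c1 c2].
  rewrite pmulr_llt0; last by rewrite invr_gt0.
  rewrite pmulr_rlt0; last exact: Vf_pos.
  lra.
Qed.
End V.
Arguments Vf {R}.

Section Core.
Context {R : realType}.

Lemma hF_pos (g : R) : -2 < g < 2 -> 0 < hF g.
Proof. move=> /andP[g1 g2]; rewrite /hF sqrtr_gt0. nra. Qed.

Lemma hF_sq (g : R) : -2 < g < 2 -> hF g ^+ 2 = 1 - g ^+ 2 / 4.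
Proof. move=> /andP[g1 g2]; rewrite /hF sqr_sqrtr //. rewrite expr2; nra. Qed.

Lemma core (g q Z : R) : -2 < g < 2 -> 0 < q ->
  (Num.sqrt (Z ^+ 2 + g * q * Z + q ^+ 2) *
     expR (GF g * atan ((Z + g * q / 2) / (hF g * q)) / 2)) ^+ 2 *
  Vf (- GF g) (hF g) ((Z + g * q / 2) / q) = q ^+ 2.
Proof.
move=> gb qp.
have hp := hF_pos g gb. have hs := hF_sq g gb.
set h := hF g in hp hs *.
have h0 : h != 0 by rewrite gt_eqF.
have q0 : q != 0 by rewrite gt_eqF.
set s := (Z + g * q / 2) / q.
have -> : (Z + g * q / 2) / (h * q) = h^-1 * s by rewrite /s; field; rewrite h0 q0.
have B : Z ^+ 2 + g * q * Z + q ^+ 2 = q ^+ 2 * (s * s + h ^+ 2).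
  rewrite hs /s; field; exact: q0.
have sp : 0 < s * s + h ^+ 2.
  by apply: ltr_wpDl; [rewrite -expr2 sqr_ge0 | rewrite exprn_gt0].
rewrite B /Vf exprMn sqr_sqrtr; last by rewrite mulr_ge0 ?sqr_ge0 ?ltW.
rewrite -expRM_natr.
set a := GF g * atan (h^-1 * s).
have -> : a / 2 * 2%:R = a by field.
rewrite mulNr -/a expRN.
have e0 : expR a != 0 by rewrite gt_eqF ?expR_gt0.
field. by rewrite e0 gt_eqF.
Qed.
End Core.

Section Mx.
Context {R : realType} {n : nat}.

Definition ev (t z : R) : 'rV[R]_(n.+2) :=
  \row_j (if j == ord_max then z else if (j : nat) == 0%N then t else 0).

Lemma Xc_ev t z (a : 'I_n.+1) : Xc (ev t z) a = if (a : nat) == 0%N then t else 0.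
Proof.
rewrite /Xc /ev mxE; case: eqP => // /(congr1 val) /= an.
by move: (ltn_ord a); rewrite an ltnn.
Qed.

Lemma Zc_ev t z : Zc (ev t z) = z.
Proof. by rewrite /Zc /ev mxE eqxx. Qed.

Lemma qf_ev (r : 'M[R]_n.+1) t z : qf r (ev t z) = Num.sqrt (r 0 0 * t * t).
Proof.
rewrite /qf big_ord_recl [X in _ + X]big1 ?addr0; last first.
  by move=> i _; apply: big1 => j _; rewrite !Xc_ev /= mulr0 mul0r.
rewrite big_ord_recl [X in _ + X]big1 ?addr0; last by move=> i _; rewrite !Xc_ev /= mulr0.
by rewrite !Xc_ev.
Qed.

Lemma qf0 (r : 'M[R]_n.+1) : qf r 0 = 0.
Proof.
rewrite /qf big1 ?sqrtr0 // => i _; apply: big1 => j _.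
by rewrite /Xc mxE mulr0 mul0r.
Qed.

Lemma r00_pos (r : 'M[R]_n.+1) : sym_posdef r -> 0 < r 0 0.
Proof.
move=> [_ rp].
pose x : 'rV[R]_n.+1 := \row_j (if (j : nat) == 0%N then 1 else 0).
have xn : x != 0.
  apply/eqP => /matrixP/(_ 0 0); rewrite !mxE /= => /eqP; by rewrite oner_eq0.
have := rp x xn.
rewrite !mxE big_ord_recl big1 ?addr0; last by move=> i _; rewrite !mxE /= mulr0.
rewrite !mxE /= mulr1 big_ord_recl big1 ?addr0; last by move=> i _; rewrite !mxE /= mul0r.
by rewrite !mxE /= mul1r.
Qed.
End Mx.

Theorem theorem2p9 (R : realType) (n : nat) (r : 'M[R]_(n.+1)) (g : R) :
  sym_posdef r -> -2 < g < 2 ->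
  exists (qss Phiss : R),
    (* q** = max { q(R) : K(g;R) <= 1 } : attained and an upper bound *)
    ((exists v : 'rV[R]_(n.+2), KF r g v <= 1 /\ qf r v = qss) /\
     (forall v : 'rV[R]_(n.+2), KF r g v <= 1 -> qf r v <= qss)) /\
    (* Phi** = Phi(g;R) at any R with q(R) > 0 and Z = -g q(R) *)
    (forall v : 'rV[R]_(n.+2),
        0 < qf r v -> Zc v = - (g * qf r v) -> PhiF r g v = Phiss) /\
    (* width of the Finsleroid *)
    2 * qss = 2 * expR (- (GF g * Phiss / 2)) /\
    (* the maximum is attained (only) at points with Z = -g q *)
    (forall v : 'rV[R]_(n.+2),
        KF r g v <= 1 -> qf r v = qss -> Zc v = - (g * qf r v)).
Proof.
move=> rpd gb.
have hp := hF_pos g gb. have hs := hF_sq g gb.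
have h0 : hF g != 0 by rewrite gt_eqF.
have Gh : GF g * hF g = g by rewrite /GF; field.
set h := hF g in hp hs h0 Gh *.
set G := GF g in Gh *.
set Phiss := atan (- G / 2).
set qss := expR (- (G * Phiss / 2)).
exists qss, Phiss.
have qssp : 0 < qss := expR_gt0 _.
set s0 := - G * h / 2.
have Vs0 : Vf (- G) h s0 = qss ^+ 2.
  rewrite /Vf /qss -expRM_natr.
  have -> : h^-1 * s0 = - G / 2 by rewrite /s0; field.
  have -> : s0 * s0 + h ^+ 2 = 1.
    rewrite hs /s0. have -> : - G * h / 2 = - g / 2 by rewrite -Gh; field.
    by field.
  rewrite divr1; congr expR; rewrite /Phiss; by field.
have KFe : forall v : 'rV[R]_(n.+2), 0 < qf r v ->
    KF r g v ^+ 2 * Vf (- G) h ((Zc v + g * qf r v / 2) / qf r v) = qf r v ^+ 2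
    /\ 0 <= KF r g v.
  move=> v qp.
  have vn : v != 0 by apply: contraTneq qp => ->; rewrite qf0 ltxx.
  rewrite /KF (negbTE vn) /JF /PhiF qp /BF /AF.
  split; first exact: core.
  by rewrite mulr_ge0 ?sqrtr_ge0 ?expR_ge0.
have Vle : forall s, Vf (- G) h s <= qss ^+ 2.
  move=> s; rewrite -Vs0; case: (eqVneq s s0) => [-> //|ne].
  exact/ltW/Vf_strict.
have bnd : forall v : 'rV[R]_(n.+2), KF r g v <= 1 -> 0 < qf r v ->
    qf r v ^+ 2 <= Vf (- G) h ((Zc v + g * qf r v / 2) / qf r v).
  move=> v K1 qp; have [E K0] := KFe v qp.
  rewrite -E; have := @Vf_pos R (- G) h hp ((Zc v + g * qf r v / 2) / qf r v).
  set V := Vf _ _ _ => Vp.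
  rewrite ler_piMl ?(ltW Vp) // expr2; nra.
split; [split|split; [|split]].
-
  have r0 := r00_pos r rpd.
  pose t := qss / Num.sqrt (r 0 0).
  have sr : 0 < Num.sqrt (r 0 0) by rewrite sqrtr_gt0.
  have qv : qf r (ev t (- (g * qss))) = qss.
    rewrite qf_ev.
    have -> : r 0 0 * t * t = qss ^+ 2.
      have e : r 0 0 = Num.sqrt (r 0 0) ^+ 2 by rewrite sqr_sqrtr ?ltW.
      rewrite /t {1}e.
      field. by rewrite gt_eqF.
    by rewrite sqrtr_sqr gtr0_norm.
  exists (ev t (- (g * qss))); split => //.
  have qp : 0 < qf r (ev t (- (g * qss))) by rewrite qv.
  have [E K0] := KFe _ qp.
  move: E; rewrite qv Zc_ev.
  have -> : (- (g * qss) + g * qss / 2) / qss = s0.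
    rewrite /s0 -Gh; field; by rewrite gt_eqF.
  rewrite Vs0 => E.
  have K2 : KF r g (ev t (- (g * qss))) ^+ 2 = 1.
    apply: (mulIf (x := qss ^+ 2)); first by rewrite gt_eqF ?exprn_gt0.
    by rewrite E mul1r.
  move: K2 K0; set K := KF _ _ _ => K2 K0.
  rewrite expr2 in K2; nra.
- move=> v K1.
  case: (ltrP 0 (qf r v)) => qp; last exact: (le_trans qp (ltW qssp)).
  have := bnd v K1 qp; have := Vle ((Zc v + g * qf r v / 2) / qf r v).
  move=> a b; have c := le_trans b a.
  rewrite !expr2 in c; nra.
- move=> v qp Zv; rewrite /PhiF qp /AF Zv /Phiss; congr atan.
  rewrite -/h -Gh; field; rewrite h0 gt_eqF //.
- by [].
- move=> v K1 qv.
  have qp : 0 < qf r v by rewrite qv.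
  have b := bnd v K1 qp.
  set s := (Zc v + g * qf r v / 2) / qf r v in b.
  have ss : s = s0.
    apply/eqP; apply: contraT => ne.
    have := @Vf_strict R (- G) h hp s ne; rewrite Vs0 -qv => c.
    have := lt_le_trans c b; by rewrite ltxx.
  move: ss; rewrite /s /s0 mulNr Gh => ss.
  have q0 : qf r v != 0 by rewrite gt_eqF.
  have e : Zc v + g * qf r v / 2 = - g / 2 * qf r v by rewrite -ss mulfVK.
  apply: (addIr (g * qf r v / 2)); rewrite e; by field.
Qed.
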